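(* Let $G$ be a connected claw-free graph of order $n$. Then $\gamma_{oir2}(G)\geq n/2$. Moreover, $\gamma_{oir2}(G)=n/2$ if and only if $G$ is isomorphic to a graph in the family $\mathcal{G}=\mathcal{G}_1\cup\mathcal{G}_2\cup\mathcal{G}_3$ described in the context.
   Context: All graphs are finite and simple. For a graph $G$, a function $f:V(G)\to\mathcal{P}(\{1,2\})$ is a 2-rainbow dominating function if every vertex $v$ with $f(v)=\emptyset$ satisfies $\bigcup_{u\in N(v)}f(u)=\{1,2\}$. It is an outer-independent 2-rainbow dominating function (OI2RD function) if, in addition, the set $\{v: f(v)=\emptyset\}$ is independent. The weight of $f$ is $\sum_{v\in V(G)}|f(v)|$, and $\gamma_{oir2}(G)$ is the minimum weight of an OI2RD function of $G$. A graph is claw-free if it has no induced subgraph isomorphic to $K_{1,3}$. For $k\geq 1$, a $k$-unit is the graph with vertices $v_1,\dots,v_k,u_1,\dots,u_{k-1}$ whose edges are $v_iv_{i+1}$ and $u_iv_i$, $u_iv_{i+1}$ for $1\le i\le k-1$ (a path $v_1\cdots v_k$ with a triangle on each path edge; it has $k-1$ triangles; a 1-unit is $K_1$). Call $v_1$ and $v_k$ its first and last path vertices. $\mathcal{G}_1$: take integers $r\ge1$ and $k_1,\dots,k_r\ge1$ with $k_1+\dots+k_r$ even, take disjoint units $U_1,\dots,U_r$ where $U_j$ is a $k_j$-unit with path $v^j_1\cdots v^j_{k_j}$, and add new vertices $w_1,\dots,w_r$, where $w_j$ is adjacent exactly to $v^j_{k_j}$ and $v^{j+1}_1$ (indices of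 units taken modulo $r$, so $w_r$ is adjacent to $v^r_{k_r}$ and $v^1_1$). (This includes the cycles $C_n$ with $n\equiv 0 \pmod 4$, when all $k_j=1$.) $\mathcal{G}_2$: take a $k$-unit with $k\ge2$ even (so the number of triangles $k-1$ is odd) and add one new vertex adjacent exactly to $v_1$ and $v_k$. $\mathcal{G}_3$: take a cycle $x_1x_2\cdots x_{2q}x_1$ of even length $2q\ge4$ and, for each cycle edge $x_ix_{i+1}$ (indices mod $2q$), add a new vertex adjacent exactly to $x_i$ and $x_{i+1}$ (so the number of triangles is even). *)

(* Defs.v *)
From mathcomp Require Import all_boot.
Set Implicit Arguments. Unset Strict Implicit. Unset Printing Implicit Defensive.

(* A finite simple graph is a symmetric irreflexive relation e on a finType T.
   Connectivity: every two vertices are joined by an e-path (connect e). *)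
Definition connected (T : finType) (e : rel T) : Prop := forall x y, connect e x y.

Definition claw_free (T : finType) (e : rel T) : Prop :=
  ~ exists c a b d : T,
      [/\ e c a, e c b, e c d, [&& a != b, a != d & b != d] &
          [&& ~~ e a b, ~~ e a d & ~~ e b d]].

(* Labels {1,2} are represented by 'I_2. *)
Definition labelling (T : finType) := {ffun T -> {set 'I_2}}.

Definition oi2rd (T : finType) (e : rel T) (f : labelling T) : bool :=
  [forall v, (f v == set0) ==> (\bigcup_(u | e v u) f u == setT)] &&
  [forall u, forall v, ((f u == set0) && (f v == set0)) ==> ~~ e u v].

Definition weight (T : finType) (f : labelling T) : nat := \sum_(v : T) #|f v|.

(* Minimum weight of an OI2RD function.  The constant function {1,2} is always
   an OI2RD function of weight 2|T|, so 2|T| is a harmless initial value. *)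
Definition gamma_oir2 (T : finType) (e : rel T) : nat :=
  \big[minn/(2 * #|T|)]_(f : labelling T | oi2rd e f) weight f.

Definition isomorphic (T1 T2 : finType) (e1 : rel T1) (e2 : rel T2) : Prop :=
  exists f : T1 -> T2, bijective f /\ forall x y, e1 x y = e2 (f x) (f y).

(* Vertices are triples (c, j, a): c = 0 : path vertex v^j_{a+1} (a < k_j),
   c = 1 : triangle vertex u^j_{a+1} (a+1 < k_j), c = 2 : w_j (a = 0).
   Unit indices j range over 'I_r (0-based), so unit j+1 is (j+1) mod r. *)
Definition G1M (r : nat) (k : nat -> nat) : nat := \max_(j < r) k j.

Definition G1valid (r : nat) (k : nat -> nat)
    (x : 'I_3 * 'I_r * 'I_(G1M r k)) : bool :=
  let: (c, j, a) := x in
  if val c == 0 then a < k j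
  else if val c == 1 then a.+1 < k j
  else val a == 0.

Definition G1V (r : nat) (k : nat -> nat) : finType :=
  {x : 'I_3 * 'I_r * 'I_(G1M r k) | @G1valid r k x}.

Definition G1adj0 (r : nat) (k : nat -> nat) (c j a c' j' b : nat) : bool :=
  [|| [&& c == 0, c' == 0, j == j' & (a.+1 == b) || (b.+1 == a)],
      [&& c == 1, c' == 0, j == j' & (b == a) || (b == a.+1)]
    | [&& c == 2, c' == 0 &
          ((j' == j) && (b == (k j).-1)) || ((j' == j.+1 %% r) && (b == 0))]].

Definition G1rel (r : nat) (k : nat -> nat) : rel (G1V r k) :=
  fun x y =>
    let: (c, j, a) := val x in
    let: (c', j', b) := val y in
    G1adj0 r k c j a c' j' b || G1adj0 r k c' j' b c j a.

Definition in_G1 (T : finType) (e : rel T) : Prop :=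
  exists (r : nat) (k : nat -> nat),
    [/\ 0 < r, (forall j, j < r -> 0 < k j), ~~ odd (\sum_(j < r) k j) &
        isomorphic e (@G1rel r k)].

(* (c, a): c = 0 : v_{a+1} (a < k), c = 1 : u_{a+1} (a+1 < k), c = 2 : the new vertex. *)
Definition G2valid (k : nat) (x : 'I_3 * 'I_k) : bool :=
  let: (c, a) := x in
  if val c == 0 then true
  else if val c == 1 then a.+1 < k
  else val a == 0.

Definition G2V (k : nat) : finType := {x : 'I_3 * 'I_k | G2valid x}.

Definition G2adj0 (k : nat) (c a c' b : nat) : bool :=
  [|| [&& c == 0, c' == 0 & (a.+1 == b) || (b.+1 == a)],
      [&& c == 1, c' == 0 & (b == a) || (b == a.+1)]
    | [&& c == 2, c' == 0 & (b == 0) || (b == k.-1)]].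

Definition G2rel (k : nat) : rel (G2V k) :=
  fun x y =>
    let: (c, a) := val x in
    let: (c', b) := val y in
    G2adj0 k c a c' b || G2adj0 k c' b c a.

Definition in_G2 (T : finType) (e : rel T) : Prop :=
  exists k : nat, [/\ 2 <= k, ~~ odd k & isomorphic e (@G2rel k)].

(* (0, i) : cycle vertex x_{i+1};  (1, i) : vertex adjacent to x_{i+1}, x_{i+2}
   (indices mod 2q). *)
Definition G3V (q : nat) : finType := ('I_2 * 'I_(2 * q))%type.

Definition G3adj0 (q : nat) (c i c' i' : nat) : bool :=
  [|| [&& c == 0, c' == 0 & i' == i.+1 %% (2 * q)]
    | [&& c == 1, c' == 0 & (i' == i) || (i' == i.+1 %% (2 * q))]].

Definition G3rel (q : nat) : rel (G3V q) :=
  fun x y => G3adj0 q x.1 x.2 y.1 y.2 || G3adj0 q y.1 y.2 x.1 x.2.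

Definition in_G3 (T : finType) (e : rel T) : Prop :=
  exists q : nat, 2 <= q /\ isomorphic e (@G3rel q).

Definition in_family (T : finType) (e : rel T) : Prop :=
  [\/ in_G1 e, in_G2 e | in_G3 e].

(* Main.v *)
Require Import Defs.
From mathcomp Require Import all_boot zify.
Set Implicit Arguments. Unset Strict Implicit. Unset Printing Implicit Defensive.

Lemma iso_sym (T1 T2 : finType) (e1 : rel T1) (e2 : rel T2) :
  isomorphic e1 e2 -> isomorphic e2 e1.
Proof.
case=> f [[g fK gK] H]; exists g; split; first by exists f.
by move=> x y; rewrite H !gK.
Qed.

Lemma iso_trans (T1 T2 T3 : finType) (e1 : rel T1) (e2 : rel T2) (e3 : rel T3) :
  isomorphic e1 e2 -> isomorphic e2 e3 -> isomorphic e1 e3.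
Proof.
case=> f [bf Hf] [g [bg Hg]]; exists (g \o f); split; first exact: bij_comp.
by move=> x y; rewrite Hf Hg.
Qed.

Lemma iso_eq (T : finType) (e1 e2 : rel T) : e1 =2 e2 -> isomorphic e1 e2.
Proof. by move=> H; exists id; split => //; exists id. Qed.

Lemma inj_surj_bij (A B : finType) (f : A -> B) :
  injective f -> (forall y, exists x, f x = y) -> bijective f.
Proof.
move=> fi fs; apply: inj_card_bij => //.
rewrite -(card_codom fi); apply: subset_leq_card; apply/subsetP => y _.
by have [x <-] := fs y; apply: codom_f.
Qed.

Lemma bigmin_le (I : finType) (P : pred I) (F : I -> nat) x0 i0 :
  P i0 -> \big[minn/x0]_(i | P i) F i <= F i0.
Proof.
move=> Pi0; have : i0 \in index_enum I by rewrite mem_index_enum.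
elim: (index_enum I) => [//|a s IH]; rewrite inE big_cons => /orP[/eqP<-|/IH H].
- by rewrite Pi0 geq_minl.
- by case: (P a) => //; exact: leq_trans (geq_minr _ _) H.
Qed.

Lemma gamma_le (T : finType) (e : rel T) (f : labelling T) :
  oi2rd e f -> gamma_oir2 e <= weight f.
Proof. by move=> H; rewrite /gamma_oir2; exact: bigmin_le. Qed.

Lemma iso_gamma_le (T1 T2 : finType) (e1 : rel T1) (e2 : rel T2) (f2 : labelling T2) :
  isomorphic e1 e2 -> oi2rd e2 f2 -> gamma_oir2 e1 <= weight f2 /\ #|T1| = #|T2|.
Proof.
case=> phi [bphi Hphi] Hf; split; last exact: bij_eq_card bphi.
pose f1 : labelling T1 := [ffun x => f2 (phi x)].
have ->: weight f2 = weight f1.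
  rewrite /weight (reindex phi) /=; last exact: onW_bij.
  by apply: eq_bigr => x _; rewrite ffunE.
apply: gamma_le.
move: Hf => /andP[/forallP H1 /forallP H2]; apply/andP; split.
- apply/forallP => v; rewrite ffunE; apply/implyP => /(implyP (H1 (phi v))).
  rewrite (reindex phi) /=; last exact: onW_bij.
  have -> : \bigcup_(j | e2 (phi v) (phi j)) f2 (phi j) =
            \bigcup_(j | e1 v j) f1 j.
    by apply: eq_big => [j|j _]; rewrite ?Hphi ?ffunE.
  by [].
- apply/forallP=> u; apply/forallP => v; rewrite !ffunE Hphi.
  exact: (forallP (H2 (phi u)) (phi v)).
Qed.

Lemma card_bigcup_le (T I : finType) (P : pred I) (F : I -> {set T}) :
  #|\bigcup_(i | P i) F i| <= \sum_(i | P i) #|F i|.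
Proof.
apply: (big_ind2 (fun (A : {set T}) n => #|A| <= n)) => //.
- by rewrite cards0.
- move=> A a B b HA HB; apply: leq_trans (leq_card_setU A B) _; exact: leq_add.
Qed.

Lemma sum_eq_pw (I : finType) (P : pred I) (F G : I -> nat) :
  (forall i, P i -> F i <= G i) -> \sum_(i | P i) G i <= \sum_(i | P i) F i ->
  forall i, P i -> F i = G i.
Proof.
move=> H Hs i Pi.
have := leqif_sum (fun i Pi => leqif_eq (H i Pi)).
case=> _ /esym; rewrite eqn_leq Hs leq_sum // => /forall_inP /(_ i Pi) /eqP //.
Qed.

Section LB.
Variables (T : finType) (e : rel T) (f : labelling T).
Hypotheses (e_sym : symmetric e) (cf : claw_free e) (Hf : oi2rd e f).

Definition isS (v : T) := f v == set0.

Lemma indep u v : isS u -> isS v -> ~~ e u v.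
Proof.
move: Hf => /andP[_ /forallP H2] Hu Hv.
by have := forallP (H2 u) v; rewrite /isS in Hu Hv; rewrite Hu Hv.
Qed.

Lemma cover_all s : isS s -> \bigcup_(u | e s u) f u = setT.
Proof. by move: Hf => /andP[/forallP H1 _] Hs; apply/eqP; exact: (implyP (H1 s)). Qed.

Definition Dg u := \sum_(s | isS s) (e s u : nat).

Lemma Dg_card u : Dg u = #|[set t | e u t && isS t]|.
Proof.
rewrite /Dg -sum1_card big_mkcond /= [RHS]big_mkcond /=.
by apply: eq_bigr => s _; rewrite inE e_sym; case: (isS s); case: (e u s).
Qed.

Lemma Dg_le2 u : ~~ isS u -> Dg u <= 2.
Proof.
move=> Hu; rewrite Dg_card leqNgt; apply/negP => /card_gt2P [a [b [d [[Ha Hb Hd] [ab bd da]]]]].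
move: Ha Hb Hd; rewrite !inE => /andP[ua Sa] /andP[ub Sb] /andP[ud Sd].
apply: cf; exists u, a, b, d; split => //.
  by rewrite ab eq_sym da bd.
by rewrite !indep.
Qed.

Let S := [set v | isS v].
Definition Qs s := \sum_(u | e s u) #|f u|.

Lemma hW : weight f = \sum_(v | ~~ isS v) #|f v|.
Proof.
rewrite /weight (bigID isS) /= big1 ?add0n // => v /eqP->; exact: cards0.
Qed.

Lemma hC : #|~: S| = \sum_(v | ~~ isS v) 1.
Proof. by rewrite -sum1_card; apply: eq_bigl => v; rewrite !inE. Qed.

Lemma h1 v : ~~ isS v -> 1 <= #|f v|.
Proof. by rewrite card_gt0. Qed.

Lemma hS : 2 * #|S| = \sum_(s | isS s) 2.
Proof. by rewrite sum_nat_const mulnC; congr (_ * _); apply: eq_card => v; rewrite inE. Qed.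

Lemma hQ s : isS s -> 2 <= Qs s.
Proof.
move=> Hs; apply: leq_trans (card_bigcup_le _ _).
by rewrite cover_all // cardsT card_ord.
Qed.

Lemma hX : \sum_(s | isS s) Qs s = \sum_u #|f u| * Dg u.
Proof.
rewrite /Qs.
under eq_bigr => s _ do rewrite big_mkcond /=.
rewrite exchange_big /=; apply: eq_bigr => u _.
rewrite /Dg big_distrr /=; apply: eq_bigr => s _.
by case: (e s u); rewrite ?muln1 ?muln0.
Qed.

Lemma hD u : #|f u| * Dg u <= #|f u| * 2.
Proof.
case Hu: (isS u); first by move: Hu => /eqP->; rewrite cards0.
by rewrite leq_mul2l Dg_le2 ?Hu ?orbT.
Qed.

Lemma hSle : #|S| <= weight f.
Proof.
rewrite -(leq_pmul2l (isT : 0 < 2)) hS.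
apply: leq_trans (@leq_sum _ _ isS (fun _ => 2) Qs hQ) _; rewrite hX.
apply: leq_trans (@leq_sum _ _ xpredT (fun u => #|f u| * Dg u) (fun u => #|f u| * 2) (fun u _ => hD u)) _.
by rewrite /weight [2 * _]mulnC big_distrl /=.
Qed.

Lemma hCle : #|~: S| <= weight f.
Proof. by rewrite hC hW; apply: leq_sum => v; exact: h1. Qed.

Lemma weight_lb : #|T| <= 2 * weight f.
Proof. by rewrite -(cardsC S); have := hSle; have := hCle; lia. Qed.

Lemma weight_eq : 2 * weight f = #|T| ->
  [/\ (forall v, ~~ isS v -> #|f v| = 1),
      (forall s, isS s -> #|[set u | e s u]| = 2) &
      (forall u, ~~ isS u -> #|[set t | e u t && isS t]| = 2)].
Proof.
rewrite -(cardsC S) => Heq.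
have HS : #|S| = weight f by have := hSle; have := hCle; lia.
have HC : #|~: S| = weight f by have := hSle; have := hCle; lia.
have P1 : forall v, ~~ isS v -> #|f v| = 1.
  move=> v Hv; apply/esym; apply: (sum_eq_pw (P := fun v => ~~ isS v)) h1 _ v Hv.
  by rewrite -hC -hW HC.
have P2 : forall s, isS s -> Qs s = 2.
  move=> s Hs; apply/esym; apply: (sum_eq_pw (P := isS)) hQ _ s Hs.
  rewrite -hS HS hX; apply: leq_trans (@leq_sum _ _ xpredT (fun u => #|f u| * Dg u) (fun u => #|f u| * 2) (fun u _ => hD u)) _.
  by rewrite /weight [2 * _]mulnC big_distrl /=.
have P3 : forall u, #|f u| * Dg u = #|f u| * 2.
  move=> u; apply: (sum_eq_pw (P := predT)) (fun u _ => hD u) _ u isT.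
  rewrite -hX; apply: leq_trans _ (@leq_sum _ _ isS (fun _ => 2) Qs hQ); rewrite -hS HS.
  by rewrite /weight [2 * _]mulnC big_distrl /=.
split => //.
- move=> s Hs; rewrite -(P2 s Hs) /Qs -sum1_card; apply: eq_big => [u|u]; first by rewrite inE.
  rewrite inE => Hu; rewrite P1 //; apply/negP => Su; by have := indep Hs Su; rewrite Hu.
- move=> u Hu; rewrite -Dg_card; have := P3 u; rewrite P1 // !mul1n; exact.
Qed.

End LB.

Definition CycAdj0 (m : nat) (h : nat -> bool) (c i c' i' : nat) : bool :=
  [|| [&& c == 0, c' == 0 & (i' == i.+1 %% m) && h i]
    | [&& c == 1, c' == 0 & (i' == i) || (i' == i.+1 %% m)]].

Definition CycRel (m : nat) (h : nat -> bool) : rel ('I_2 * 'I_m) :=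
  fun x y => CycAdj0 m h x.1 x.2 y.1 y.2 || CycAdj0 m h y.1 y.2 x.1 x.2.
Arguments CycRel : clear implicits.

Definition Pk (k : nat -> nat) (j : nat) := \sum_(t < j) k t.
Definition hkf (r : nat) (k : nat -> nat) (i : nat) :=
  ~~ has (fun j => i.+1 == Pk k j.+1) (iota 0 r).

Lemma PkS k j : Pk k j.+1 = Pk k j + k j.
Proof. by rewrite /Pk big_ord_recr. Qed.

Lemma Pk0 k : Pk k 0 = 0.
Proof. by rewrite /Pk big_ord0. Qed.

Lemma Pk_mono k j j' : j <= j' -> Pk k j <= Pk k j'.
Proof.
move=> H; rewrite -(subnKC H); elim: (j' - j) => [|d IH]; first by rewrite addn0.
by rewrite addnS PkS; apply: leq_trans IH (leq_addr _ _).
Qed.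

Lemma Pk_surj k n i : i < Pk k n -> exists j, [/\ j < n, Pk k j <= i & i < Pk k j + k j].
Proof.
elim: n => [|n IH]; first by rewrite Pk0.
case: (ltnP i (Pk k n)) => [/IH [j [H1 H2 H3]] _|H1 H2].
  by exists j; split => //; rewrite ltnS ltnW.
by exists n; split => //; rewrite -PkS.
Qed.

Section G1iso.
Variables (r : nat) (k : nat -> nat).
Hypotheses (r_gt0 : 0 < r) (k_gt0 : forall j, j < r -> 0 < k j).

Local Notation P := (Pk k).
Local Notation m := (Pk k r).
Local Notation hk := (hkf r k).

Lemma P_uniq j j' a b : j < r -> j' < r -> a < k j -> b < k j' ->
  P j + a = P j' + b -> j = j' /\ a = b.
Proof.
wlog le : j j' a b / j <= j'.
  move=> W H1 H2 H3 H4 H5; case: (leqP j j') => l; first exact: W.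
  by have [-> ->] := W j' j b a (ltnW l) H2 H1 H4 H3 (esym H5).
move=> H1 H2 H3 H4 H5; case: (ltnP j j') => l.
  have := Pk_mono k l; rewrite PkS; lia.
have -> : j = j' by apply/eqP; rewrite eqn_leq le l.
split => //; move: H5; have -> : j = j' by apply/eqP; rewrite eqn_leq le l.
lia.
Qed.

Lemma P_eq j j' a b : j < r -> j' < r -> a < k j -> b < k j' ->
  (P j' + b == P j + a) = (j' == j) && (b == a).
Proof.
move=> H1 H2 H3 H4; apply/eqP/andP => [/esym E | [/eqP -> /eqP ->] //].
by have [-> ->] := P_uniq H1 H2 H3 H4 E.
Qed.

Lemma P_lt_m j a : j < r -> a < k j -> P j + a < m.
Proof. move=> H1 H2; have := Pk_mono k H1; rewrite PkS; lia. Qed.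

Lemma m_gt0 : 0 < m.
Proof. by have := P_lt_m r_gt0 (k_gt0 r_gt0); rewrite Pk0. Qed.

Lemma hk_val j a : j < r -> a < k j -> hk (P j + a) = (a.+1 < k j).
Proof.
move=> H1 H2; apply/idP/idP.
  apply: contraLR; rewrite -leqNgt => H3; apply/negPn/hasP; exists j.
    by rewrite mem_iota.
  by rewrite PkS; apply/eqP; lia.
move=> H3; apply/hasPn => j'; rewrite mem_iota add0n => /andP[_ Hj'].
rewrite PkS; apply/negP => /eqP E.
have Kj' := k_gt0 Hj'.
have E' : P j + a = P j' + (k j').-1 by lia.
have Kp : (k j').-1 < k j' by rewrite ltn_predL.
have [E1 E2] := P_uniq H1 Hj' H2 Kp E'.
by move: H3; rewrite E2 E1; lia.
Qed.

Lemma L00 j j' a b : j < r -> j' < r -> a < k j -> b < k j' ->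
  ((j == j') && (a.+1 == b)) = ((P j' + b == (P j + a).+1 %% m) && hk (P j + a)).
Proof.
move=> H1 H2 H3 H4; rewrite hk_val //.
case: (ltnP a.+1 (k j)) => H5.
  rewrite andbT -addnS modn_small; last exact: P_lt_m.
  by rewrite P_eq // eq_sym [b == _]eq_sym.
rewrite andbF; apply/negP => /andP[/eqP E1 /eqP E2]; move: H4; rewrite -E1 -E2; lia.
Qed.

Lemma L10 j j' a b : j < r -> j' < r -> a.+1 < k j -> b < k j' ->
  ((j == j') && ((b == a) || (b == a.+1))) =
  ((P j' + b == P j + a) || (P j' + b == (P j + a).+1 %% m)).
Proof.
move=> H1 H2 H3 H4; rewrite -addnS modn_small; last exact: P_lt_m.
by rewrite !P_eq // ?(ltnW H3) // eq_sym andb_orr.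
Qed.

Lemma L20 j j' b : j < r -> j' < r -> b < k j' ->
  (((j' == j) && (b == (k j).-1)) || ((j' == j.+1 %% r) && (b == 0))) =
  ((P j' + b == P j + (k j).-1) || (P j' + b == (P j + (k j).-1).+1 %% m)).
Proof.
move=> H1 H2 H3; have Kj := k_gt0 H1.
rewrite P_eq ?ltn_predL //; congr (_ || _).
have -> : (P j + (k j).-1).+1 = P j.+1 + 0 by rewrite PkS; lia.
case: (ltnP j.+1 r) => H5.
  by rewrite (modn_small (P_lt_m H5 (k_gt0 H5))) (modn_small H5) P_eq //; exact: (k_gt0 H5).
have E : j.+1 = r by apply/eqP; rewrite eqn_leq H1 H5.
rewrite E addn0 modnn modnn.
have Z : (P j' + b == 0) = (P j' + b == P 0 + 0) by rewrite Pk0.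
rewrite Z P_eq //; exact: (k_gt0 r_gt0).
Qed.

Definition g1pos (c j a : nat) := if c == 2 then P j + (k j).-1 else P j + a.
Definition g1col (c : nat) : 'I_2 := if c == 0 then ord0 else ord_max.

Definition phi (x : G1V r k) : 'I_2 * 'I_m :=
  let: (c, j, a) := val x in (g1col c, insubd (Ordinal m_gt0) (g1pos c j a)).

Lemma g1pos_lt (c : 'I_3) (j : 'I_r) (a : 'I_(G1M r k)) :
  G1valid (c, j, a) -> g1pos c j a < m.
Proof.
rewrite /G1valid /g1pos; have Kj := k_gt0 (ltn_ord j).
case: c => [[|[|[|c]]] Hc] //= H.
- exact: P_lt_m.
- apply: P_lt_m => //; exact: ltnW.
- by apply: P_lt_m (ltn_ord j) _; rewrite ltn_predL.
Qed.

Lemma phi_val (c : 'I_3) (j : 'I_r) (a : 'I_(G1M r k)) (H : G1valid (c, j, a)) :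
  phi (exist _ (c, j, a) H) = (g1col c, insubd (Ordinal m_gt0) (g1pos c j a))
  /\ val (insubd (Ordinal m_gt0) (g1pos c j a) : 'I_m) = g1pos c j a.
Proof. by split => //; rewrite val_insubd g1pos_lt. Qed.

Lemma phi_rel (x y : G1V r k) : @G1rel r k x y = CycRel m hk (phi x) (phi y).
Proof.
case: x => [[[c j] a] Hx]; case: y => [[[c' j'] b] Hy].
have [-> Ex] := phi_val Hx; have [-> Ey] := phi_val Hy.
rewrite /G1rel /CycRel /= Ex Ey {Ex Ey}.
move: Hx Hy; rewrite /G1valid /g1pos /g1col.
have Hj := ltn_ord j; have Hj' := ltn_ord j'.
case: c => [[|[|[|c]]] Hc] //=; case: c' => [[|[|[|c']]] Hc'] //= Hx Hy;
  rewrite /G1adj0 /CycAdj0 /= ?orbF ?andbF ?orbF //.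
- rewrite -(L00 Hj Hj' Hx Hy) -(L00 Hj' Hj Hy Hx).
  have -> : (nat_of_ord j' == nat_of_ord j) = (nat_of_ord j == nat_of_ord j') by rewrite eq_sym.
  by case: (_ == _); case: (a.+1 == b); case: (b.+1 == a).
- by rewrite (L10 Hj' Hj Hy Hx).
- by rewrite (L20 Hj' Hj Hx).
- by rewrite (L10 Hj Hj' Hx Hy).
- by rewrite (L20 Hj Hj' Hy).
Qed.

Lemma phi_inj : injective phi.
Proof.
case=> [[[c j] a] Hx] [[[c' j'] b] Hy].
have [-> Ex] := phi_val Hx; have [-> Ey] := phi_val Hy.
case=> Ec Ep.
have {Ep} Ep : g1pos c j a = g1pos c' j' b by rewrite -Ex -Ey Ep.
clear Ex Ey; apply: val_inj => /=.
have Hj := ltn_ord j; have Hj' := ltn_ord j'.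
move: Hx Hy Ec Ep; rewrite /G1valid /g1pos /g1col.
case: c => [[|[|[|c]]] Hc] //=; case: c' => [[|[|[|c']]] Hc'] //= Hx Hy;
  move=> /(congr1 val) //= _ Ep.
- have [/val_inj E1 /val_inj E2] := P_uniq Hj Hj' Hx Hy Ep; subst.
  by rewrite (bool_irrelevance Hc Hc').
- have [/val_inj E1 /val_inj E2] := P_uniq Hj Hj' (ltnW Hx) (ltnW Hy) Ep; subst.
  by rewrite (bool_irrelevance Hc Hc').
- have Kp : (k j').-1 < k j' by rewrite ltn_predL; exact: k_gt0.
  have [E1 E2] := P_uniq Hj Hj' (ltnW Hx) Kp Ep; move: Hx; rewrite E2 E1; lia.
- have Kp : (k j).-1 < k j by rewrite ltn_predL; exact: k_gt0.
  have [E1 E2] := P_uniq Hj' Hj (ltnW Hy) Kp (esym Ep); move: Hy; rewrite E2 E1; lia.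
- have Kp : (k j).-1 < k j by rewrite ltn_predL; exact: k_gt0.
  have Kp' : (k j').-1 < k j' by rewrite ltn_predL; exact: k_gt0.
  have [/val_inj E1 _] := P_uniq Hj Hj' Kp Kp' Ep; subst.
  have E2 : a = b by apply/eqP; rewrite -val_eqE /= (eqP Hx) (eqP Hy).
  by subst; rewrite (bool_irrelevance Hc Hc').
Qed.

Lemma phi_surj y : exists x, phi x = y.
Proof.
case: y => b i.
have [j [Hj H1 H2]] := Pk_surj (ltn_ord i).
pose jo := Ordinal Hj.
have HM : k j <= G1M r k by exact: (leq_bigmax (F := fun j : 'I_r => k j) jo).
have Ha : i - P j < G1M r k by apply: leq_trans HM; lia.
pose ao := Ordinal Ha.
have Ei : P j + (i - P j) = i by lia.
case: b => [[|[|b]] Hb] //.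
- have Hv : G1valid (Ordinal (isT : 0 < 3), jo, ao) by rewrite /G1valid /=; lia.
  exists (exist (@G1valid r k) _ Hv); have [-> _] := phi_val Hv.
  rewrite /g1pos /g1col /= Ei valKd; congr (_, _); exact: val_inj.
- case: (ltnP (i - P j).+1 (k j)) => H3.
  + have Hv : G1valid (Ordinal (isT : 1 < 3), jo, ao) by rewrite /G1valid /=.
    exists (exist (@G1valid r k) _ Hv); have [-> _] := phi_val Hv.
    rewrite /g1pos /g1col /= Ei valKd; congr (_, _); exact: val_inj.
  + have H0 : 0 < G1M r k by apply: leq_trans HM; exact: k_gt0.
    have Hv : G1valid (Ordinal (isT : 2 < 3), jo, Ordinal H0) by rewrite /G1valid /=.
    exists (exist (@G1valid r k) _ Hv); have [-> _] := phi_val Hv.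
    have Ei' : P j + (k j).-1 = i by lia.
    rewrite /g1pos /g1col /= Ei' valKd; congr (_, _); exact: val_inj.
Qed.

Lemma G1_Cyc : isomorphic (@G1rel r k) (CycRel m hk).
Proof.
exists phi; split; first exact: inj_surj_bij phi_inj phi_surj.
exact: phi_rel.
Qed.
End G1iso.

Lemma CycRel_eq m h h' : (forall i, i < m -> h i = h' i) -> CycRel m h =2 CycRel m h'.
Proof. by move=> H [b i] [b' i']; rewrite /CycRel /CycAdj0 /= !H. Qed.

Lemma compose m (h : nat -> bool) : 0 < m -> ~~ h m.-1 ->
  exists r k, [/\ 0 < r, (forall j, j < r -> 0 < k j), Pk k r = m &
                  forall i, i < m -> h i = hkf r k i].
Proof.
elim/ltn_ind: m => m IH Hm Hl.
case: (boolP [exists i : 'I_m.-1, ~~ h i]) => [Hex|].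
  have exP : exists i, (i < m.-1) && ~~ h i.
    by move/existsP: Hex => [i Hi]; exists i; rewrite ltn_ord Hi.
  have ubP : forall i, (i < m.-1) && ~~ h i -> i <= m by move=> i /andP[H _]; lia.
  case: (ex_maxnP exP ubP) => i0 /andP[Hi0 Hh0] Hmax.
  have [|||r0 [k0 [Hr0 Hk0 HP0 Hh]]] := IH i0.+1 => //; first by lia.
  pose k := fun j => if j < r0 then k0 j else m - i0.+1.
  have EP : forall j, j <= r0 -> Pk k j = Pk k0 j.
    move=> j Hj; apply: eq_bigr => t _; rewrite /k.
    by have -> : t < r0 by apply: leq_trans (ltn_ord t) Hj.
  have EPm : Pk k r0.+1 = m by rewrite PkS EP // HP0 /k ltnn; lia.
  exists r0.+1, k; split => //.
  - by move=> j Hj; rewrite /k; case: ifP => Hj'; [exact: Hk0 | lia].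
  - move=> i Hi; rewrite /hkf -[r0.+1]addn1 iotaD has_cat /= orbF add0n EPm.
    have -> : has (fun j => i.+1 == Pk k j.+1) (iota 0 r0) =
              has (fun j => i.+1 == Pk k0 j.+1) (iota 0 r0).
      by apply: eq_in_has => j; rewrite mem_iota => /andP[_ Hj]; rewrite EP.
    case: (ltnP i i0.+1) => Hi'.
      have -> : (i.+1 == m) = false by apply/negbTE; lia.
      by rewrite orbF (Hh i Hi').
    have -> : has (fun j => i.+1 == Pk k0 j.+1) (iota 0 r0) = false.
      apply/negbTE/hasPn => j; rewrite mem_iota add0n => /andP[_ Hj].
      have := Pk_mono k0 Hj; lia.
    rewrite /=; case: (ltnP i m.-1) => Hi2.
      have -> : h i by apply/negPn/negP => Hn; have := Hmax i; rewrite Hi2 Hn /=; lia.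
      by apply/esym/negbT; apply/negbTE; lia.
    have -> : i = m.-1 by lia.
    by rewrite (negbTE Hl) prednK // eqxx.
move/existsPn => Hall.
have Hall' : forall i, i < m.-1 -> h i.
  by move=> i Hi; have := Hall (Ordinal Hi); rewrite negbK.
exists 1, (fun _ => m); split => //.
- by rewrite PkS Pk0.
- move=> i Hi; rewrite /hkf /= orbF PkS Pk0 add0n.
  case: (ltnP i m.-1) => Hi2.
    by rewrite Hall' //; apply/esym/negbT; apply/negbTE; lia.
  have -> : i = m.-1 by lia.
  by rewrite (negbTE Hl) prednK // eqxx.
Qed.

Lemma sing_neq0 (x : 'I_2) : ([set x] == set0) = false.
Proof. by apply/negbTE/set0Pn; exists x; rewrite inE. Qed.

Section Cf.
Variables (m : nat) (h : nat -> bool).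
Hypotheses (m_gt0 : 0 < m) (m_even : ~~ odd m).

Definition fC : labelling ('I_2 * 'I_m)%type :=
  [ffun x : 'I_2 * 'I_m => if val x.1 == 0 then (if odd x.2 then [set ord_max] else [set ord0]) else set0].

Lemma odd_next (i : 'I_m) : odd (i.+1 %% m) = ~~ odd i.
Proof.
have Hi := ltn_ord i; case: (ltnP i.+1 m) => H.
  by rewrite modn_small.
have E : i.+1 = m by lia.
have Me := m_even; rewrite -E /= negbK in Me.
by rewrite E modnn Me.
Qed.

Lemma fC_oi2rd : oi2rd (CycRel m h) fC.
Proof.
apply/andP; split.
- apply/forallP => [[b i]]; apply/implyP; rewrite ffunE /=.
  case: b => [[|[|b]] Hb] //=.
    by case: (odd i); rewrite sing_neq0.
  move=> _; rewrite eqEsubset subsetT /=; apply/subsetP => l _.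
  pose i1 : 'I_m := Ordinal (ltn_pmod i.+1 m_gt0).
  have R0 : CycRel m h (Ordinal Hb, i) (ord0, i) by rewrite /CycRel /CycAdj0 /= eqxx.
  have R1 : CycRel m h (Ordinal Hb, i) (ord0, i1) by rewrite /CycRel /CycAdj0 /= eqxx !orbT.
  have O1 : odd i1 = ~~ odd i by exact: odd_next.
  case: l => [[|[|l]] Hl] //.
  + case Ho: (odd i).
    * apply/bigcupP; exists (ord0, i1) => //; rewrite ffunE /= O1 Ho /= inE; exact/eqP/val_inj.
    * apply/bigcupP; exists (ord0, i) => //; rewrite ffunE /= Ho /= inE; exact/eqP/val_inj.
  + case Ho: (odd i).
    * apply/bigcupP; exists (ord0, i) => //; rewrite ffunE /= Ho /= inE; exact/eqP/val_inj.
    * apply/bigcupP; exists (ord0, i1) => //; rewrite ffunE /= O1 Ho /= inE; exact/eqP/val_inj.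
- apply/forallP => [[b i]]; apply/forallP => [[b' i']]; apply/implyP; rewrite !ffunE /=.
  case: b => [[|[|b]] Hb] //=; first by case: (odd i); rewrite sing_neq0.
  case: b' => [[|[|b']] Hb'] //=; first by case: (odd i'); rewrite sing_neq0 andbF.
Qed.

Lemma fC_weight : weight fC = m.
Proof.
have -> : weight fC = \sum_(i < 2) \sum_(j < m) #|fC (i, j)|.
  by rewrite pair_bigA; apply: eq_bigr => [[i j]].
rewrite big_ord_recl big_ord_recl big_ord0 /=.
rewrite addn0 [X in _ + X]big1 ?addn0; last by move=> j _; rewrite ffunE /= cards0.
rewrite -[RHS]card_ord -sum1_card; apply: eq_bigr => j _; rewrite ffunE /=.
by case: (odd j); rewrite cards1.
Qed.

Lemma Cyc_upper (T : finType) (e : rel T) :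
  isomorphic e (CycRel m h) -> 2 * gamma_oir2 e <= #|T|.
Proof.
move=> Hi; have [H1 H2] := iso_gamma_le Hi fC_oi2rd.
by rewrite H2 card_prod !card_ord -fC_weight leq_mul2l H1 orbT.
Qed.
End Cf.

Lemma G3_Cyc q : @G3rel q =2 CycRel (2 * q) (fun _ => true).
Proof. by move=> [c i] [c' i']; rewrite /G3rel /CycRel /G3adj0 /CycAdj0 /= !andbT. Qed.

Section G2iso.
Variable k : nat.
Hypothesis k_gt0 : 0 < k.
Local Notation kf := (fun _ : nat => k).

Lemma EM : k = G1M 1 kf.
Proof. by rewrite /G1M big_ord1. Qed.

Definition d0 : G1V 1 kf.
Proof.
refine (exist _ (ord0, ord0, cast_ord EM (Ordinal k_gt0)) _).
by rewrite /G1valid /=.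
Defined.

Definition psi (x : G2V k) : G1V 1 kf :=
  let: (c, a) := val x in insubd d0 (c, ord0, cast_ord EM a).

Lemma psi_val (c : 'I_3) (a : 'I_k) (H : G2valid (c, a)) :
  val (psi (exist _ (c, a) H)) = (c, ord0, cast_ord EM a).
Proof.
rewrite /psi /= val_insubd; case: ifP => // /negP []; move: H.
by rewrite /G1valid /G2valid /=; case: ifP => // _; case: ifP.
Qed.

Lemma psi_inj : injective psi.
Proof.
case=> [[c a] Hx] [[c' b] Hy] /(congr1 val); rewrite !psi_val => [[E1 E2]].
have E : a = b by apply: val_inj.
move: Hx Hy; rewrite E1 E => Hx Hy; congr exist; exact: bool_irrelevance.
Qed.

Lemma psi_surj y : exists x, psi x = y.
Proof.
case: y => [[[c j] a] Hy].
have Hv : G2valid (c, cast_ord (esym EM) a).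
  by move: Hy; rewrite /G1valid /G2valid /=; case: ifP => // _; case: ifP.
exists (exist (@G2valid k) _ Hv); apply: val_inj; rewrite psi_val /=.
rewrite cast_ordKV; clear Hy Hv; have Ej : j = ord0 by apply/val_inj; case: j => [[|j] Hj].
by rewrite Ej.
Qed.

Lemma psi_rel x y : @G2rel k x y = @G1rel 1 kf (psi x) (psi y).
Proof.
case: x => [[c a] Hx]; case: y => [[c' b] Hy].
rewrite /G1rel !psi_val /G2rel /= /G2adj0 /G1adj0 /=.
move: (nat_of_ord b == 0) (nat_of_ord b == k.-1) (nat_of_ord a == 0) (nat_of_ord a == k.-1) => p q p' q'.
by rewrite (orbC p q) (orbC p' q').
Qed.

Lemma G2_G1 : isomorphic (@G2rel k) (@G1rel 1 kf).
Proof. exists psi; split; [exact: inj_surj_bij psi_inj psi_surj | exact: psi_rel]. Qed.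
End G2iso.

Lemma family_upper (T : finType) (e : rel T) : in_family e -> 2 * gamma_oir2 e <= #|T|.
Proof.
case.
- move=> [r [k [Hr Hk Ho Hi]]].
  apply: (Cyc_upper (m := Pk k r) (h := hkf r k) (m_gt0 Hr Hk) Ho).
  exact: iso_trans Hi (G1_Cyc Hr Hk).
- move=> [k [Hk Ho Hi]].
  have Hk0 : 0 < k by lia.
  have Hk' : forall j, j < 1 -> 0 < (fun _ : nat => k) j by [].
  apply: (Cyc_upper (m := Pk (fun _ => k) 1) (h := hkf 1 (fun _ => k)) (m_gt0 (isT : 0 < 1) Hk')).
    by rewrite PkS Pk0.
  exact: iso_trans (iso_trans Hi (G2_G1 Hk0)) (G1_Cyc (isT : 0 < 1) Hk').
- move=> [q [Hq Hi]].
  apply: (Cyc_upper (m := 2 * q) (h := fun _ => true)); first by lia.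
    by rewrite oddM.
  exact: (iso_trans Hi (@iso_eq (G3V q) _ _ (@G3_Cyc q))).
Qed.

Lemma cyc_family (T : finType) (e : rel T) m h :
  0 < m -> ~~ odd m -> isomorphic e (CycRel m h) ->
  (forall i, i < m -> h i) \/ ~~ h m.-1 -> in_family e.
Proof.
have G1case : forall m h, 0 < m -> ~~ odd m -> isomorphic e (CycRel m h) ->
    ~~ h m.-1 -> in_family e.
  move=> {}m {}h Hm Ho Hi Hl.
  have [r [k [Hr Hk Ek Hh]]] := compose Hm Hl.
  subst m; apply: Or31; exists r, k; split => //.
  apply: iso_trans Hi _; apply: iso_trans (iso_eq (CycRel_eq Hh)) _.
  exact: iso_sym (G1_Cyc Hr Hk).
move=> Hm Ho Hi [Hall|Hl]; last exact: G1case Hi Hl.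
case: (ltnP m 3) => Hm3.
  have E2 : m = 2 by move: Ho; case: m Hm Hm3 {Hi Hall} => [|[|[|]]].
  subst m; apply: (G1case 2 (fun i => i == 0)) => //.
  apply: iso_trans Hi (iso_eq _).
  have H0 := Hall 0 isT; have H1 := Hall 1 isT.
  move=> [[[|[|b]] Hb] [[|[|i]] Hi']] [[[|[|b']] Hb'] [[|[|i']] Hi'']] //;
    by rewrite /CycRel /CycAdj0 /= ?H0 ?H1.
have [q Eq] : exists q, m = 2 * q by exists m./2; rewrite -{1}(odd_double_half m) (negbTE Ho) add0n -mul2n.
subst m; apply: Or33; exists q; split; first by lia.
apply: iso_trans Hi _; apply: iso_trans (iso_eq (CycRel_eq (h' := fun _ => true) Hall)) _.
exact: iso_sym (iso_eq (@G3_Cyc q)).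
Qed.

Lemma oth_spec (T : finType) (A : {set T}) x :
  #|A| = 2 -> x \in A ->
  [/\ odflt x [pick y in A | y != x] \in A, odflt x [pick y in A | y != x] != x &
      forall y, y \in A -> y = x \/ y = odflt x [pick y in A | y != x]].
Proof.
move=> /eqP/cards2P [a [b [ab ->]]] xA.
case: pickP => [y /andP[yA yx] | none] /=.
- split=> // z; move: xA yA yx; rewrite !inE => /orP[]/eqP-> /orP[]/eqP-> //;
    rewrite ?eqxx // => _ /orP[]/eqP->; by [left|right].
- exfalso; move: xA; rewrite !inE => /orP[]/eqP Ex.
  + by have := none b; rewrite !inE eqxx orbT Ex eq_sym ab.
  + by have := none a; rewrite !inE eqxx Ex ab.
Qed.

Lemma arith0 k i L : 0 < L -> k + 0 + 1 = i + L -> k = (i + L).-1.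
Proof. lia. Qed.
Lemma arith3 k t i L : k + t.+1 + 1 = i + L -> k.+1 + t + 1 = i + L.
Proof. lia. Qed.
Lemma arith1 i L j t : j < L -> 1 + (t + t) = i + L - j -> j + t + t + 1 = i + L.
Proof. lia. Qed.
Lemma arith2 i L j t : j < L -> 0 < L -> 0 + (t + t) = i + L - j ->
  0 < t /\ (j + t).-1 + t + 1 = i + L.
Proof. lia. Qed.

Section Orbit.
Variables (T : finType) (e : rel T) (f : labelling T).
Hypotheses (e_sym : symmetric e) (e_irr : irreflexive e) (cf : claw_free e)
  (Hf : oi2rd e f) (e_conn : connected e)
  (HL : forall v, ~~ isS f v -> #|f v| = 1)
  (HA : forall s, isS f s -> #|[set u | e s u]| = 2)
  (HB : forall u, ~~ isS f u -> #|[set t | e u t && isS f t]| = 2).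

Definition NA s := [set u | e s u].
Definition NB u := [set t | e u t && isS f t].
Definition oth (A : {set T}) x := odflt x [pick y in A | y != x].

Lemma othP (A : {set T}) x : #|A| = 2 -> x \in A ->
  [/\ oth A x \in A, oth A x != x & forall y, y \in A -> y = x \/ y = oth A x].
Proof. exact: oth_spec. Qed.

Lemma oth_eq (A : {set T}) x y : #|A| = 2 -> x \in A -> y \in A -> y != x -> oth A x = y.
Proof. by move=> H xA yA yx; have [_ _ /(_ y yA)] := othP H xA => [[E|//]]; rewrite E eqxx in yx. Qed.

Lemma oth_inj (A : {set T}) x y : #|A| = 2 -> x \in A -> y \in A -> oth A x = oth A y -> x = y.
Proof.
move=> H xA yA E; apply/eqP/negPn/negP => xy.
have E1 := oth_eq H xA yA (negbT (contraNF (fun h => h) _)).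
have E1' : oth A x = y by apply: oth_eq => //; rewrite eq_sym.
have E2 : oth A y = x by apply: oth_eq.
by move: xy; rewrite -E1' E E2 eqxx.
Qed.

Definition valid (d : T * T) := [&& ~~ isS f d.1, isS f d.2 & e d.1 d.2].

Definition step (d : T * T) : T * T :=
  if valid d then let v' := oth (NA d.2) d.1 in (v', oth (NB v') d.2) else d.

Lemma NA_in v s : e v s -> v \in NA s.
Proof. by rewrite inE e_sym. Qed.

Lemma step_facts v s : valid (v, s) ->
  let v' := oth (NA s) v in let s' := oth (NB v') s in
  [/\ e s v', v' != v, ~~ isS f v', s \in NB v' & (s' \in NB v' /\ s' != s)] /\
  [/\ valid (v', s'), e v' s & e v' s'].
Proof.
case/and3P => /= Hv Hs Hvs; set v' := oth (NA s) v; set s' := oth (NB v') s.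
have [A1 A2 _] := othP (HA Hs) (NA_in Hvs).
have Hsv' : e s v' by move: A1; rewrite inE.
have Hv' : ~~ isS f v' by apply/negP => Sv'; have := indep Hf Hs Sv'; rewrite Hsv'.
have sB : s \in NB v' by rewrite inE e_sym Hsv' Hs.
have [B1 B2 _] := othP (HB Hv') sB.
move: (B1); rewrite inE => /andP[Hv's' Ss'].
split; first by split => //; split => //; exact/andP.
by split => //; [rewrite /valid /= Hv' Ss' Hv's' | rewrite e_sym].
Qed.

Lemma step_valid d : valid d -> valid (step d).
Proof.
case: d => v s Hd; rewrite /step Hd /=.
by have [_ [H _ _]] := step_facts Hd.
Qed.

Lemma step_inj : injective step.
Proof.
move=> [v1 s1] [v2 s2]; rewrite /step.
case H1: (valid (v1, s1)); case H2: (valid (v2, s2)) => /=.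
- move=> [Ev Es].
  have [[a1 a2 a3 a4 [a5 a6]] _] := step_facts H1.
  have [[b1 b2 b3 b4 [b5 b6]] _] := step_facts H2.
  move: b4 b5 Es; rewrite -Ev => b4 b5 Es.
  have Es' : s1 = s2 by apply: (oth_inj (HB a3)) => //.
  subst s2; congr (_, _).
  move: H1 H2 => /and3P[_ Hs Hvs1] /and3P[_ _ Hvs2].
  by apply: (oth_inj (HA Hs)) => //; exact: NA_in.
- move=> E; have := step_valid H1; rewrite /step H1 E H2 //.
- move=> E; have := step_valid H2; rewrite /step H2 -E H1 //.
- by [].
Qed.

Section D0.
Variable d0 : T * T.
Hypothesis Hd0 : valid d0.

Definition dd n := iter n step d0.
Definition cc n := (dd n).1.
Definition ss n := (dd n).2.
Definition LL := order step d0.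

Lemma dd_valid n : valid (dd n).
Proof. by elim: n => [|n IH] //; rewrite /dd iterS; exact: step_valid. Qed.

Lemma ddE n : dd n = (cc n, ss n).
Proof. by rewrite /cc /ss; case: (dd n). Qed.

Lemma ddS n : dd n.+1 = step (dd n).
Proof. by rewrite /dd iterS. Qed.

Lemma LL_gt0 : 0 < LL.
Proof. exact: order_gt0. Qed.

Lemma dd_per n : dd (n + LL) = dd n.
Proof. by rewrite /dd iterD iter_order //; exact: step_inj. Qed.

Lemma dd_mod n : dd n = dd (n %% LL).
Proof.
rewrite {1}(divn_eq n LL); elim: (n %/ LL) => [|q IH]; first by rewrite mul0n add0n.
have -> : q.+1 * LL + n %% LL = (q * LL + n %% LL) + LL by rewrite mulSn; lia.
by rewrite dd_per.
Qed.

Lemma dd_inj i j : i < LL -> j < LL -> dd i = dd j -> i = j.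
Proof.
move=> Hi Hj E.
by rewrite -(findex_iter Hi) -(findex_iter Hj); rewrite /dd in E; rewrite E.
Qed.

Lemma dd_injm i j : dd i = dd j -> i %% LL = j %% LL.
Proof.
rewrite (dd_mod i) (dd_mod j) => E.
by apply: dd_inj => //; apply: ltn_pmod; exact: LL_gt0.
Qed.

Lemma cc_ss_facts n :
  [/\ ~~ isS f (cc n), isS f (ss n), e (cc n) (ss n), e (ss n) (cc n.+1) &
      [/\ cc n.+1 != cc n, ss n.+1 != ss n,
          forall y, e (ss n) y -> y = cc n \/ y = cc n.+1 &
          forall t, isS f t -> e (cc n.+1) t -> t = ss n \/ t = ss n.+1]].
Proof.
have Hv := dd_valid n; rewrite ddE in Hv.
have [[a1 a2 a3 a4 [a5 a6]] [b1 b2 b3]] := step_facts Hv.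
have Ec : cc n.+1 = oth (NA (ss n)) (cc n) by rewrite /cc ddS ddE /step Hv.
have Es : ss n.+1 = oth (NB (cc n.+1)) (ss n) by rewrite /ss ddS ddE /step Hv /= -/(cc n.+1) Ec.
move: Hv => /and3P[/= Hc Hs Hcs].
split => //; first by rewrite Ec.
split; [by rewrite Ec | by rewrite Es Ec | |].
- move=> y Hy; have [_ _ /(_ y)] := othP (HA Hs) (NA_in Hcs).
  by rewrite -Ec inE; apply.
- move=> t St Ht; rewrite Ec in Es Ht *.
  have [_ _ /(_ t)] := othP (HB a3) a4.
  by rewrite -Es inE Ht St; apply.
Qed.

Lemma cnbr n y : ~~ isS f y -> e (cc n.+1) y -> y = cc n \/ y = cc n.+2.
Proof.
move=> Sy Hy.
have [c1 c2 c3 c4 [c5 c6 c7 c8]] := cc_ss_facts n.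
have [d1 d2 d3 d4 [d5 d6 d7 d8]] := cc_ss_facts n.+1.
case Ha: (e y (ss n)).
  rewrite e_sym in Ha; case: (c7 y Ha) => E; first by left.
  by move: Hy; rewrite E e_irr.
case Hb: (e y (ss n.+1)).
  rewrite e_sym in Hb; case: (d7 y Hb) => [E|E]; last by right.
  by move: Hy; rewrite E e_irr.
exfalso; apply: cf; exists (cc n.+1), (ss n), (ss n.+1), y; split => //.
- by rewrite e_sym.
- rewrite eq_sym c6 /=; apply/andP; split; apply/negP => E; move: Sy;
  by rewrite -(eqP E) ?c2 ?d2.
- by rewrite (indep Hf c2 d2) e_sym Ha e_sym Hb.
Qed.

Lemma cc_in (n : nat) : exists i : 'I_LL, cc n = cc i.
Proof. by exists (Ordinal (ltn_pmod n LL_gt0)); rewrite /cc -dd_mod. Qed.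

Lemma ss_in (n : nat) : exists i : 'I_LL, ss n = ss i.
Proof. by exists (Ordinal (ltn_pmod n LL_gt0)); rewrite /ss -dd_mod. Qed.

Definition XX := [set x | [exists i : 'I_LL, (cc i == x) || (ss i == x)]].

Lemma cc_X n : cc n \in XX.
Proof. by have [i E] := cc_in n; rewrite inE; apply/existsP; exists i; rewrite E eqxx. Qed.

Lemma ss_X n : ss n \in XX.
Proof. by have [i E] := ss_in n; rewrite inE; apply/existsP; exists i; rewrite E eqxx orbT. Qed.

Lemma ccL n : cc (n + LL) = cc n.
Proof. by rewrite /cc dd_per. Qed.
Lemma ssL n : ss (n + LL) = ss n.
Proof. by rewrite /ss dd_per. Qed.

Lemma cc_prev n : cc (n + LL).-1.+1 = cc n.
Proof. by rewrite prednK ?ccL //; have := LL_gt0; lia. Qed.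

Lemma XX_closed x y : e x y -> x \in XX -> y \in XX.
Proof.
move=> Hxy; rewrite inE => /existsP [i /orP[]/eqP Ex].
- have E := cc_prev i; set n := (i + LL).-1 in E.
  have [c1 c2 c3 c4 [c5 c6 c7 c8]] := cc_ss_facts n.
  have H' : e (cc n.+1) y by rewrite E Ex.
  case Sy: (isS f y).
    by case: (c8 y Sy H') => ->; exact: ss_X.
  by case: (cnbr (negbT Sy) H') => ->; exact: cc_X.
- have [c1 c2 c3 c4 [c5 c6 c7 c8]] := cc_ss_facts i.
  have H' : e (ss i) y by rewrite Ex.
  by case: (c7 y H') => ->; exact: cc_X.
Qed.

Lemma all_X x : x \in XX.
Proof.
have Hc : closed e XX.
  move=> a b Hab; apply/idP/idP; first exact: XX_closed.
  by apply: XX_closed; rewrite e_sym.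
by rewrite -(closed_connect Hc (e_conn (cc 0) x)) cc_X.
Qed.

Lemma rev_step k : step (cc k.+2, ss k.+1) = (cc k.+1, ss k).
Proof.
have [a1 a2 a3 a4 [a5 a6 a7 a8]] := cc_ss_facts k.
have [b1 b2 b3 b4 [b5 b6 b7 b8]] := cc_ss_facts k.+1.
have [c1 _ _ _ _] := cc_ss_facts k.+2.
have Hv : valid (cc k.+2, ss k.+1) by rewrite /valid /= c1 b2 e_sym b4.
rewrite /step Hv /=.
have E1 : oth (NA (ss k.+1)) (cc k.+2) = cc k.+1.
  apply: oth_eq; [exact: HA | by rewrite inE | by rewrite inE e_sym | by rewrite eq_sym].
rewrite E1; congr (_, _); apply: oth_eq; [exact: HB | by rewrite inE b3 | | by rewrite eq_sym].
by rewrite inE e_sym a4 a2.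
Qed.

Lemma cc_inj i j : i < LL -> j < LL -> cc i = cc j -> i = j.
Proof.
move=> Hi Hj Ec; apply/eqP/negPn/negP => ij.
have Ed : dd i != dd j by apply/negP => /eqP/(dd_inj Hi Hj)/eqP; rewrite (negbTE ij).
have Es : ss i != ss j by apply: contra Ed; rewrite !ddE Ec => /eqP->.
set i' := (i + LL).-1.
have Ei : cc i'.+1 = cc i := cc_prev i.
have Ei2 : ss i'.+1 = ss i by rewrite prednK ?ssL //; have := LL_gt0; lia.
have [c1 c2 c3 c4 [c5 c6 c7 c8]] := cc_ss_facts i'.
have [j1 j2 j3 _ _] := cc_ss_facts j.
have Esj : ss j = ss i'.
  have H' : e (cc i'.+1) (ss j) by rewrite Ei Ec.
  case: (c8 (ss j) j2 H') => // E.
  by move: Es; rewrite E Ei2 eqxx.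
have R : forall t k, k + t + 1 = i + LL -> dd (j + t) = (cc k.+1, ss k).
  elim=> [|t IH] k Hk.
    have -> : k = i' by rewrite /i'; exact: arith0 LL_gt0 Hk.
    by rewrite addn0 ddE Ei -Ec Esj.
  by rewrite addnS ddS (IH k.+1) ?rev_step //; exact: arith3.
have H := odd_double_half (i + LL - j); rewrite -addnn in H.
move: H; set t := (i + LL - j)./2 => H.
case Hod : (odd (i + LL - j)); rewrite Hod /= in H.
- have Hk := arith1 Hj H.
  have := R t (j + t) Hk; rewrite ddE; case=> E1.
  have [_ _ _ _ [h5 _ _ _]] := cc_ss_facts (j + t).
  by rewrite E1 eqxx in h5.
- have [Ht Hk] := arith2 Hj LL_gt0 H.
  have := R t (j + t).-1 Hk; rewrite ddE; case=> _ E1.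
  have [_ _ _ _ [_ h6 _ _]] := cc_ss_facts (j + t).-1.
  have Ejt : (j + t).-1.+1 = j + t by rewrite prednK //; rewrite addn_gt0 Ht orbT.
  by rewrite Ejt E1 eqxx in h6.
Qed.

Lemma cc_modE n : cc n = cc (n %% LL).
Proof. by rewrite /cc -dd_mod. Qed.

Lemma cc_mod a b : cc a = cc b -> a %% LL = b %% LL.
Proof.
rewrite (cc_modE a) (cc_modE b) => E.
by apply: cc_inj => //; apply: ltn_pmod; exact: LL_gt0.
Qed.

Lemma cc_dd a b : cc a = cc b -> dd a = dd b.
Proof. by move/cc_mod => E; rewrite (dd_mod a) (dd_mod b) E. Qed.

Lemma ss_inj i j : i < LL -> j < LL -> ss i = ss j -> i = j.
Proof.
move=> Hi Hj Es; apply/eqP/negPn/negP => ij.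
have Ed : dd i != dd j by apply/negP => /eqP/(dd_inj Hi Hj)/eqP; rewrite (negbTE ij).
have Ec : cc i != cc j by apply: contra Ed; rewrite !ddE Es => /eqP->.
have [a1 a2 a3 a4 [a5 a6 a7 a8]] := cc_ss_facts i.
have [b1 b2 b3 b4 [b5 b6 b7 b8]] := cc_ss_facts j.
have Hj1 : j = i.+1 %% LL.
  have H' : e (ss i) (cc j) by rewrite Es e_sym.
  case: (a7 _ H') => E; first by rewrite E eqxx in Ec.
  by rewrite -(modn_small Hj); apply: cc_mod.
have Hi1 : i = j.+1 %% LL.
  have H' : e (ss j) (cc i) by rewrite -Es e_sym.
  case: (b7 _ H') => E; first by rewrite E eqxx in Ec.
  by rewrite -(modn_small Hi); apply: cc_mod.
have [_ _ _ _ [_ z6 _ _]] := cc_ss_facts 0.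
case: (ltnP i.+1 LL) => H1.
  rewrite (modn_small H1) in Hj1; subst j.
  case: (ltnP i.+2 LL) => H2.
    rewrite (modn_small H2) in Hi1.
    by move: Hi1 => /eqP; rewrite -[i.+2]addn2 -{1}(addn0 i) eqn_add2l.
  have E2 : i.+2 = LL by apply/eqP; rewrite eqn_leq H2 H1.
  rewrite -E2 modnn in Hi1; subst i.
  by rewrite Es eqxx in z6.
have E1 : i.+1 = LL by apply/eqP; rewrite eqn_leq H1 Hi.
rewrite -E1 modnn in Hj1; subst j.
case: (ltnP 1 LL) => H2; last first.
  by move: ij; rewrite -E1 ltnS leqn0 in H2; rewrite (eqP H2).
rewrite (modn_small H2) in Hi1; subst i.
by rewrite -Es eqxx in z6.
Qed.

Definition hh n := e (cc n) (cc n.+1).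

Definition psiT (p : 'I_2 * 'I_LL) : T := if val p.1 == 0 then cc p.2 else ss p.2.

Lemma psiT_inj : injective psiT.
Proof.
move=> [[[|[|b]] Hb] i] [[[|[|b']] Hb'] j] //; rewrite /psiT /= => E.
- by have Eij := cc_inj (ltn_ord i) (ltn_ord j) E; congr (_, _); [exact: val_inj | exact: val_inj].
- by have [h1 _ _ _ _] := cc_ss_facts i; have [_ h2 _ _ _] := cc_ss_facts j; rewrite E h2 in h1.
- by have [h1 _ _ _ _] := cc_ss_facts j; have [_ h2 _ _ _] := cc_ss_facts i; rewrite -E h2 in h1.
- by have Eij := ss_inj (ltn_ord i) (ltn_ord j) E; congr (_, _); [exact: val_inj | exact: val_inj].
Qed.

Lemma psiT_surj y : exists p, psiT p = y.
Proof.
have := all_X y; rewrite inE => /existsP [i /orP[]/eqP E].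
- by exists (ord0, i).
- by exists (ord_max, i).
Qed.

Lemma rel10 (i j : 'I_LL) : e (ss i) (cc j) = (nat_of_ord j == i) || (nat_of_ord j == i.+1 %% LL).
Proof.
have [a1 a2 a3 a4 [a5 a6 a7 a8]] := cc_ss_facts i.
apply/idP/idP.
- move=> H; case: (a7 _ H) => E.
    by rewrite (cc_inj (ltn_ord j) (ltn_ord i) E) eqxx.
  by rewrite -(modn_small (ltn_ord j)) (cc_mod E) eqxx orbT.
- case/orP => /eqP E.
    have -> : j = i by apply: val_inj.
    by rewrite e_sym.
  by rewrite E -cc_modE.
Qed.

Lemma rel00 (i j : 'I_LL) :
  e (cc i) (cc j) = ((nat_of_ord j == i.+1 %% LL) && hh i) || ((nat_of_ord i == j.+1 %% LL) && hh j).
Proof.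
apply/idP/idP.
- move=> H.
  have E := cc_prev i; set n := (i + LL).-1 in E.
  have [c1 c2 c3 c4 _] := cc_ss_facts j.
  have H' : e (cc n.+1) (cc j) by rewrite E.
  case: (cnbr c1 H') => E2.
    have Edd : dd j = dd n by apply: cc_dd.
    have E3 : cc j.+1 = cc i by rewrite -E /cc !ddS Edd.
    have Ei : nat_of_ord i == j.+1 %% LL by rewrite (cc_mod E3) modn_small.
    by rewrite Ei /hh E3 (e_sym (cc j)) H orbT.
  have E3 : cc j = cc i.+1 by rewrite E2 /n prednK -?addSn ?ccL //; have := LL_gt0; lia.
  have Ej : nat_of_ord j == i.+1 %% LL by rewrite -(cc_mod E3) modn_small.
  by rewrite Ej /hh -E3 H.
- case/orP => /andP[/eqP E Hh].
    by move: Hh; rewrite /hh (cc_modE i.+1) -E.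
  by move: Hh; rewrite /hh (cc_modE j.+1) -E e_sym.
Qed.

Lemma psiT_rel p q : e (psiT p) (psiT q) = CycRel LL hh p q.
Proof.
case: p q => [[[|[|b]] Hb] i] [[[|[|b']] Hb'] j] //;
  rewrite /psiT /CycRel /CycAdj0 /= ?orbF ?andbF ?orbF.
- exact: rel00.
- by rewrite e_sym rel10.
- exact: rel10.
- have [_ h1 _ _ _] := cc_ss_facts i; have [_ h2 _ _ _] := cc_ss_facts j.
  exact: negbTE (indep Hf h1 h2).
Qed.

Lemma orbit_iso : isomorphic e (CycRel LL hh).
Proof.
apply: iso_sym; exists psiT; split; last by move=> x y; rewrite psiT_rel.
exact: inj_surj_bij psiT_inj psiT_surj.
Qed.

Lemma I2_three (a b z : 'I_2) : a != b -> z != b -> a = z.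
Proof.
by case: a b z => [[|[|a]] Ha] [[|[|b]] Hb] [[|[|z]] Hz] //= _ _; apply: val_inj.
Qed.

Lemma f_alt n : f (cc n.+1) != f (cc n).
Proof.
have [a1 a2 a3 a4 [a5 a6 a7 a8]] := cc_ss_facts n.
apply/negP => /eqP E.
have /cards1P [l El] : #|f (cc n)| == 1 by rewrite HL.
have [l' Hl'] : exists l' : 'I_2, l' != l.
  by case: l {El} => [[|[|l]] Hl]; [exists ord_max | exists ord0 | ].
have : l' \in \bigcup_(u | e (ss n) u) f u by rewrite (cover_all Hf a2) in_setT.
case/bigcupP => u Hu; case: (a7 _ Hu) => ->; rewrite ?E El inE => /eqP El';
  by rewrite El' eqxx in Hl'.
Qed.

Lemma f_two n : f (cc n.+2) = f (cc n).
Proof.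
have [h0 _ _ _ _] := cc_ss_facts n.
have [h1 _ _ _ _] := cc_ss_facts n.+1.
have [h2 _ _ _ _] := cc_ss_facts n.+2.
have /cards1P [a Ea] : #|f (cc n)| == 1 by rewrite HL.
have /cards1P [b Eb] : #|f (cc n.+1)| == 1 by rewrite HL.
have /cards1P [z Ez] : #|f (cc n.+2)| == 1 by rewrite HL.
have ab : a != b by apply: contra (f_alt n); rewrite Ea Eb => /eqP->.
have zb : z != b by apply: contra (f_alt n.+1); rewrite Ez Eb => /eqP->.
by rewrite Ea Ez (I2_three ab zb).
Qed.

Lemma f_par n : f (cc (2 * n)) = f (cc 0).
Proof. by elim: n => [//|n IH]; rewrite mulnS addSn add1n f_two. Qed.

Lemma LL_even : ~~ odd LL.
Proof.
apply/negP => Ho.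
have E : LL = (2 * LL./2).+1 by rewrite -{1}(odd_double_half LL) Ho -mul2n.
have := f_alt (2 * LL./2); rewrite -E f_par.
by rewrite /cc -[LL]add0n dd_per eqxx.
Qed.
End D0.

Lemma structure : (exists s, isS f s) ->
  exists m h, [/\ 0 < m, ~~ odd m, isomorphic e (CycRel m h) &
                 (forall i, i < m -> h i) \/ ~~ h m.-1].
Proof.
move=> [s Hs].
case: (boolP [exists d : T * T, valid d && ~~ e d.1 (oth (NA d.2) d.1)]) =>
  [/existsP [d /andP[Hd Hn]] | /existsPn Hall].
- pose d0 := step d; have Hd0 : valid d0 := step_valid Hd.
  exists (LL d0), (hh d0); split; [exact: LL_gt0 | exact: LL_even Hd0 | exact: orbit_iso Hd0 | right].
  have E1 : dd d0 (LL d0) = d0 by rewrite -[LL d0]add0n dd_per.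
  have Hp : (LL d0).-1.+1 = LL d0 by rewrite prednK // LL_gt0.
  have E2 : dd d0 (LL d0).-1 = d by apply: step_inj; rewrite -ddS Hp E1.
  by rewrite /hh Hp /cc E1 E2 /d0 /step Hd.
- have [u Hu] : exists u, e s u.
    have : 0 < #|[set u | e s u]| by rewrite HA.
    by rewrite card_gt0 => /set0Pn [u]; rewrite inE; exists u.
  have Hd0 : valid (u, s).
    rewrite /valid /= Hs e_sym Hu !andbT.
    by apply/negP => Su; have := indep Hf Hs Su; rewrite Hu.
  exists (LL (u, s)), (hh (u, s)); split;
    [exact: LL_gt0 | exact: LL_even Hd0 | exact: orbit_iso Hd0 | left].
  move=> i _; rewrite /hh.
  have Hv := dd_valid Hd0 i.
  have := Hall (dd (u, s) i); rewrite Hv /= negbK.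
  by rewrite /cc ddS /step Hv.
Qed.
End Orbit.

Lemma gamma_lb (T : finType) (e : rel T) : symmetric e -> claw_free e ->
  #|T| <= 2 * gamma_oir2 e.
Proof.
move=> es cf; rewrite /gamma_oir2.
apply: (big_ind (fun x => #|T| <= 2 * x)).
- lia.
- by move=> x y Hx Hy; case: (leqP x y).
- by move=> g Hg; exact: weight_lb es cf Hg.
Qed.

Lemma gamma_att (T : finType) (e : rel T) :
  gamma_oir2 e = 2 * #|T| \/ exists g, oi2rd e g /\ weight g = gamma_oir2 e.
Proof.
have : (gamma_oir2 e == 2 * #|T|) || [exists g, oi2rd e g && (weight g == gamma_oir2 e)].
  rewrite /gamma_oir2.
  apply: (big_ind (fun x => (x == 2 * #|T|) || [exists g, oi2rd e g && (weight g == x)])).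
  - by rewrite eqxx.
  - by move=> x y Hx Hy; case: (leqP x y).
  - by move=> g Hg; apply/orP; right; apply/existsP; exists g; rewrite Hg eqxx.
case/orP => [/eqP ->|/existsP [g /andP[Hg /eqP Hw]]]; first by left.
by right; exists g.
Qed.

Theorem theorem1 (T : finType) (e : rel T)
  (e_sym : symmetric e) (e_irr : irreflexive e)
  (T_nonempty : 0 < #|T|) (e_conn : connected e) (e_cf : claw_free e) :
  #|T| <= 2 * gamma_oir2 e /\ (2 * gamma_oir2 e = #|T| <-> in_family e).
Proof.
split; first exact: gamma_lb.
split; last first.
  move=> Hfam; apply/eqP; rewrite eqn_leq family_upper // gamma_lb //.
move=> Heq.
case: (gamma_att e) => [Eg|[g [Hg Hw]]].
  by move: Heq; rewrite Eg; lia.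
rewrite -Hw in Heq.
have [HL HA HB] := weight_eq e_sym e_cf Hg Heq.
have Sne : exists s, isS g s.
  case: (boolP [exists s, isS g s]) => [/existsP //|/existsPn Hn]; exfalso.
  have : weight g = #|T|.
    rewrite /weight -sum1_card; apply: eq_bigr => v _; rewrite HL //; exact: Hn.
  by move: Heq => /[swap] ->; lia.
have [m [h [Hm Ho Hi Hh]]] := structure e_sym e_irr e_cf Hg e_conn HL HA HB Sne.
exact: cyc_family Hm Ho Hi Hh.
Qed.
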